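(* Consider the following decoding setting (all notation is fixed in the context). Let $t_j = |\mathcal{A}_j|$ be the number of users transmitting in sub-block $j$, and run the index-collision-resolution procedure with the estimate $\hat{t}_j = t_j$. Assume that (no $E_1$) $t_j \le T$, and that (no $E_2$) whenever, during this run, the decoder $D$ of $\mathcal{C}$ is applied to a vector of the form $[\mathbf{c} + \tilde{\mathbf{z}}_j/2^{\ell}] \bmod 2$ with $\mathbf{c}\in\mathcal{C}$ and $\ell$ a nonnegative integer, it outputs $\mathbf{c}$. Then: (i) the list $\mathcal{L}_j(t_j)$ contains all indices $u \in \{1,\dots,n_p\}$ that were transmitted exactly once in sub-block $j$ (i.e., $|\{i\in\mathcal{A}_j : u_i = u\}| = 1$); (ii) $\hat{\mathbf{z}}_j(t_j) = \mathbf{z}_j$.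
   Context: Codes. Let $\mathbf{H}\in\{0,1\}^{m_p\times n_p}$ be a parity-check matrix of a binary linear code $\mathcal{C}_{\mathrm{aux}}$ of length $n_p$ with minimum Hamming distance $d$, and let $T=\lfloor (d-1)/2\rfloor$; denote the $u$-th column of $\mathbf{H}$ by $\mathbf{h}_u$. Let $\mathbf{G}\in\{0,1\}^{m_p\times n}$ be a generator matrix (full row rank) of a binary linear code $\mathcal{C}$ of length $n$ and dimension $m_p$. For $u\in\{1,\dots,n_p\}$ put $\mathbf{c}(u) = \mathbf{h}_u^T\mathbf{G} \bmod 2$ and define the real signal $\mathbf{x}(u)\in\mathbb{R}^n$ componentwise by $\mathbf{x}(u)_k = 2a(\mathbf{c}(u)_k - 1/2)$, where $a>0$ is a fixed constant. Channel. In sub-block $j$, a finite set $\mathcal{A}_j$ of users transmits; user $i\in\mathcal{A}_j$ chose an index $u_i\in\{1,\dots,n_p\}$ and sends $\mathbf{x}_{i,j}=\mathbf{x}(u_i)$. The received vector is $\mathbf{y}_j = \sum_{i\in\mathcal{A}_j}\mathbf{x}(u_i) + \mathbf{z}_j$ with $\mathbf{z}_j\in\mathbb{R}^n$ a noise vector; put $\tilde{\mathbf{z}}_j = \mathbf{z}_j/(2a)$. Here ''$\bmod 2$'' on real vectors is componentwise reduction into $[0,2)$. Basic decoder $\Phi$. For $\mathbf{y}\in\mathbb{R}^n$ and integer $\hat t\ge 0$, $\Phi(\mathbf{y},\hat t)$ is computed as: form $\tilde{\mathbf{y}} = [\mathbf{y}/(2a) + \hat t/2]\bmod 2$; apply a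 decoder $D$ for $\mathcal{C}$ to $\tilde{\mathbf{y}}$, obtaining a codeword $\tilde{\mathbf{c}}$ (or a flagged error); recover the unique $\tilde{\mathbf{h}}\in\{0,1\}^{m_p}$ with $\tilde{\mathbf{h}}^T\mathbf{G}=\tilde{\mathbf{c}} \bmod 2$; apply the bounded-distance syndrome decoder of $\mathcal{C}_{\mathrm{aux}}$, which returns the (unique) set $S\subseteq\{1,\dots,n_p\}$ with $|S|\le T$ and $\sum_{u\in S}\mathbf{h}_u = \tilde{\mathbf{h}} \bmod 2$ if such a set exists, and flags an error otherwise. $\Phi(\mathbf{y},\hat t)$ is the returned set $S$ (a list of indices); if any step flags an error, $\Phi$ returns $\emptyset$ and flags an error. Index-collision-resolution (ICR) procedure for an estimate $\hat t_j$: set $\mathbf{y}^{(1)}_j=\mathbf{y}_j$, $\hat t^{(1)}_j=\hat t_j$, $\mathcal{L}^{(1)}=\Phi(\mathbf{y}^{(1)}_j,\hat t^{(1)}_j)$. For $\ell\ge1$: if $|\mathcal{L}^{(\ell)}|=\hat t^{(\ell)}_j$, stop and return $\mathcal{L}^{(1)},\dots,\mathcal{L}^{(\ell)}$, setting $\tau=\ell$; if $|\mathcal{L}^{(\ell)}|>\hat t^{(\ell)}_j$, return an error; if $|\mathcal{L}^{(\ell)}|<\hat t^{(\ell)}_j$, set $\hat t^{(\ell+1)}_j=(\hat t^{(\ell)}_j-|\mathcal{L}^{(\ell)}|)/2$, return an error if this is not an integer, and otherwise set $\mathbf{y}^{(\ell+1)}_j = \big(\mathbf{y}^{(\ell)}_j-\sum_{u\in\mathcal{L}^{(\ell)}}\mathbf{x}(u)\big)/2$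 and $\mathcal{L}^{(\ell+1)}=\Phi(\mathbf{y}^{(\ell+1)}_j,\hat t^{(\ell+1)}_j)$, and continue. If no error is returned, the outputs are $\mathcal{L}_j(\hat t_j)=\mathcal{L}^{(1)}\setminus\bigcup_{\ell=2}^{\tau}\mathcal{L}^{(\ell)}$ and $\hat{\mathbf{z}}_j(\hat t_j)=\mathbf{y}_j-\sum_{\ell=1}^{\tau}2^{\ell-1}\sum_{u\in\mathcal{L}^{(\ell)}}\mathbf{x}(u)$. *)

(* Defs.v *)
From mathcomp Require Import all_boot all_order all_algebra.
From mathcomp Require Import reals.
Set Implicit Arguments. Unset Strict Implicit. Unset Printing Implicit Defensive.
Import Order.TTheory GRing.Theory Num.Theory.
Local Open Scope ring_scope.

Section ICR.
Context {R : realType} (a : R) {m_p n_p n : nat}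
  (H : 'M['F_2]_(m_p, n_p)) (G : 'M['F_2]_(m_p, n)).

Definition bitR (b : 'F_2) : R := (nat_of_ord b)%:R.

Definition mod2 (x : R) : R := x - 2 * (Num.floor (x / 2))%:~R.

Definition wt (x : 'cV['F_2]_n_p) : nat := #|[set i | x i 0 != 0]|.
Definition min_distance (d : nat) : Prop :=
  (exists x : 'cV['F_2]_n_p, x != 0 /\ H *m x = 0 /\ wt x = d) /\
  (forall x : 'cV['F_2]_n_p, x != 0 -> H *m x = 0 -> (d <= wt x)%N).

Definition in_code (c : 'rV['F_2]_n) : Prop := exists h : 'rV['F_2]_m_p, c = h *m G.

(* c(u) = h_u^T G and x(u)_k = 2a (c(u)_k - 1/2);  indices u are 0-based *)
Definition codeword (u : 'I_n_p) : 'rV['F_2]_n := (col u H)^T *m G.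
Definition xsig (u : 'I_n_p) : 'rV[R]_n :=
  \row_k (2 * a * (bitR (codeword u 0 k) - 1 / 2)).

Definition phi_input (y : 'rV[R]_n) (th : nat) : 'rV[R]_n :=
  \row_k mod2 (y 0 k / (2 * a) + th%:R / 2).

Context (T : nat) (D : 'rV[R]_n -> option 'rV['F_2]_n).

(* basic decoder Phi; on any flagged error it returns the empty set *)
Definition Phi (y : 'rV[R]_n) (th : nat) : {set 'I_n_p} :=
  match D (phi_input y th) with
  | None => set0
  | Some c =>
    match [pick h : 'rV['F_2]_m_p | h *m G == c] with
    | None => set0
    | Some h =>
      match [pick S0 : {set 'I_n_p} |
               (#|S0| <= T)%N && (\sum_(u in S0) col u H == h^T)] with
      | None => set0
      | Some S0 => S0
      end
    end
  end.

(* ICR procedure with fuel: returns the list of states (y^(l), th^(l)) at which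
   Phi was called, and Some [L^(1); ...; L^(tau)] or None (error). *)
Fixpoint icr_run (fuel : nat) (y : 'rV[R]_n) (th : nat)
  : seq ('rV[R]_n * nat) * option (seq {set 'I_n_p}) :=
  let L := Phi y th in
  if #|L| == th then ([:: (y, th)], Some [:: L])
  else if (th < #|L|)%N then ([:: (y, th)], None)
  else if odd (th - #|L|) then ([:: (y, th)], None)
  else match fuel with
       | 0 => ([:: (y, th)], None)
       | fuel'.+1 =>
         let r := icr_run fuel' ((1 / 2) *: (y - \sum_(u in L) xsig u))
                               ((th - #|L|)./2) in
         ((y, th) :: r.1, omap (cons L) r.2)
       end.

(* fuel th.+1 suffices: th strictly decreases along a continuing run *)
Definition icr_lists (y : 'rV[R]_n) (th : nat) := (icr_run th.+1 y th).2.
Definition icr_D_inputs (y : 'rV[R]_n) (th : nat) : seq 'rV[R]_n :=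
  [seq phi_input p.1 p.2 | p <- (icr_run th.+1 y th).1].

Definition L_out (Ls : seq {set 'I_n_p}) : {set 'I_n_p} :=
  head set0 Ls :\: \bigcup_(S0 <- behead Ls) S0.
Definition zhat (y : 'rV[R]_n) (Ls : seq {set 'I_n_p}) : 'rV[R]_n :=
  y - \sum_(l < size Ls) (2 ^+ l : R) *: \sum_(u in nth set0 Ls l) xsig u.

End ICR.

(* Main.v *)
Require Import Defs.
From mathcomp Require Import all_boot all_order all_algebra.
From mathcomp Require Import reals.
From mathcomp Require Import ring zify.
Import Order.TTheory GRing.Theory Num.Theory.
Local Open Scope ring_scope.

Set Implicit Arguments.
Section Aux.
Variable R : realType.

Lemma mod2_nat (N : nat) (x : R) : mod2 (N%:R + x) = mod2 ((odd N)%:R + x).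
Proof.
rewrite /mod2.
have -> : (N%:R + x) / 2 = ((odd N)%:R + x) / 2 + (N./2)%:R.
  rewrite -{1}(odd_double_half N) natrD -muln2 natrM; by field.
rewrite floorDrz ?natr_int // rmorphD /=.
have -> : Num.floor ((N./2)%:R : R) = (N./2)%:Z.
  by rewrite -[X in Num.floor X]/((N./2)%:Z%:~R) intrKfloor.
rewrite -{1}(odd_double_half N) natrD -muln2 natrM /=.
have -> : ((N./2)%:Z%:~R : R) = (N./2)%:R by [].
ring.
Qed.

Lemma bitR_nat (N : nat) : bitR (N%:R : 'F_2) = (odd N)%:R :> R.
Proof. by rewrite /bitR val_Fp_nat // modn2. Qed.


Lemma F2_bool_sub (b1 b2 : bool) : ((b1%:R - b2%:R : 'F_2) == 0) = (b1 == b2).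
Proof. by case: b1; case: b2. Qed.

Variables (m_p n_p : nat) (H : 'M['F_2]_(m_p, n_p)).

Lemma syndrome_unique (d : nat) (S S' : {set 'I_n_p}) :
  min_distance H d -> (#|S| <= (d.-1)./2)%N -> (#|S'| <= (d.-1)./2)%N ->
  \sum_(u in S) col u H = \sum_(u in S') col u H -> S = S'.
Proof.
move=> [_ hmd] hS hS' heq.
pose x : 'cV['F_2]_n_p := \col_i ((i \in S)%:R - (i \in S')%:R).
have Hx : H *m x = 0.
  apply/matrixP => j k; rewrite !mxE.
  have := congr1 (fun M : 'cV_m_p => M j 0) heq; rewrite !summxE.
  under eq_bigr do rewrite mxE; under [X in _ = X -> _]eq_bigr do rewrite mxE.
  move=> e.
  under eq_bigr do rewrite mxE mulrBr.
  rewrite sumrB.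
  rewrite [X in X - _](eq_bigr (fun i => if i \in S then H j i else 0)); last first.
    by move=> i _; case: (i \in S); rewrite ?mulr1 ?mulr0.
  rewrite [X in _ - X](eq_bigr (fun i => if i \in S' then H j i else 0)); last first.
    by move=> i _; case: (i \in S'); rewrite ?mulr1 ?mulr0.
  by rewrite -!big_mkcond /= e subrr.
have wtle : (wt x <= #|S| + #|S'|)%N.
  rewrite /wt (leq_trans _ (leq_subr #|S :&: S'| _)) // -cardsU.
  apply: subset_leq_card; apply/subsetP => i; rewrite !inE mxE F2_bool_sub.
  by case: (i \in S); case: (i \in S').
case: (eqVneq x 0) => [x0 | xn0].
  apply/setP => i; apply/eqP; rewrite -F2_bool_sub.
  by have := congr1 (fun M : 'cV_n_p => M i 0) x0; rewrite !mxE => ->.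
have := hmd x xn0 Hx.
have : (0 < wt x)%N.
  rewrite /wt card_gt0; apply: contraNneq xn0 => h2.
  apply/eqP/matrixP => i k; rewrite (ord1 k) [RHS]mxE.
  apply/eqP/negPn/negP => hi.
  have : i \in [set i | x i 0 != 0] by rewrite inE.
  by rewrite h2 inE.
move: wtle hS hS'; lia.
Qed.

Lemma card_odd (m : 'I_n_p -> nat) : #|[set u | odd (m u)]| = (\sum_u odd (m u))%N.
Proof.
rewrite -sum1_card big_mkcond /=; apply: eq_bigr => u _; rewrite inE.
by case: odd.
Qed.

Lemma Phi_eq (n : nat) (a : R) (G : 'M['F_2]_(m_p, n)) (d : nat)
  (D : 'rV[R]_n -> option 'rV['F_2]_n) (m : 'I_n_p -> nat) (w y : 'rV[R]_n) (th : nat) :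
  0 < a -> row_free G -> min_distance H d -> th = (\sum_u m u)%N -> (th <= (d.-1)./2)%N ->
  y = \sum_u (m u)%:R *: xsig a H G u + w ->
  (forall c, in_code G c -> phi_input a y th = \row_k mod2 (bitR (c 0 k) + w 0 k / (2*a)) ->
     D (phi_input a y th) = Some c) ->
  Phi a H G ((d.-1)./2) D y th = [set u | odd (m u)].
Proof.
move=> a0 rfG md hth hT hy hD.
pose hsum : 'cV['F_2]_m_p := \sum_u (m u)%:R *: col u H.
pose c := hsum^T *m G.
have cE : forall k, c 0 k = (\sum_u (m u * codeword H G u 0%R k)%N)%N%:R.
  move=> k; rewrite natr_sum.
  under [RHS]eq_bigr do rewrite natrM natr_Zp.
  rewrite /c /codeword /hsum !mxE.
  under [LHS]eq_bigr do rewrite !mxE summxE big_distrl.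
  under [RHS]eq_bigr do rewrite !mxE big_distrr.
  rewrite exchange_big /=; apply: eq_bigr => j _; apply: eq_bigr => u _.
  by rewrite !mxE mulrA.
have a2 : 2 * a != 0 by rewrite mulf_neq0 // gt_eqF.
have hin : phi_input a y th = \row_k mod2 (bitR (c 0 k) + w 0 k / (2*a)).
  apply/matrixP => i k; rewrite (ord1 i) [LHS]mxE [RHS]mxE cE bitR_nat -mod2_nat.
  congr mod2; rewrite hy hth !mxE summxE !natr_sum.
  have ex : \sum_u ((m u)%:R *: xsig a H G u) 0 k = \sum_u (m u)%:R * (2*a*(bitR (codeword H G u 0 k) - 1/2)) by apply: eq_bigr => u _; rewrite !mxE.
  rewrite ex.
  have e1 : \sum_u (m u)%:R * (2 * a * (bitR (codeword H G u 0 k) - 1 / 2)) =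
     2 * a * (\sum_u ((m u * codeword H G u 0%R k)%N)%:R) - a * \sum_u (m u)%:R.
    rewrite !mulr_sumr -sumrB; apply: eq_bigr => u _; rewrite natrM /bitR; by field.
  rewrite e1; field.
  by rewrite gt_eqF.
rewrite /Phi (hD c _ hin); last by exists hsum^T.
case: pickP => [h /eqP hh | hn]; last by have := hn hsum^T; rewrite eqxx.
have -> : h = hsum^T by apply: (row_free_inj rfG).
rewrite trmxK.
have hS1 : \sum_(u in [set u | odd (m u)]) col u H = hsum.
  rewrite /hsum big_mkcond /=; apply: eq_bigr => u _; rewrite inE.
  have -> : ((m u)%:R : 'F_2) = (odd (m u))%:R.
    by apply: val_inj; rewrite /= !val_Fp_nat // modn2; case: odd.
  by case: odd; rewrite ?scale1r ?scale0r.
have cardS1 : (#|[set u | odd (m u)]| <= th)%N.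
  rewrite card_odd hth; apply: leq_sum => u _.
  by rewrite -{2}(odd_double_half (m u)) leq_addr.
case: pickP => [S0 /andP[hS0 /eqP eS0] | hn].
  apply: (syndrome_unique md hS0 (leq_trans cardS1 hT)).
  by rewrite eS0 hS1.
by have := hn [set u | odd (m u)]; rewrite (leq_trans cardS1 hT) hS1 eqxx.
Qed.

Lemma icr_run_fst (n : nat) (a : R) (G : 'M['F_2]_(m_p, n)) (T : nat)
  (D : 'rV[R]_n -> option 'rV['F_2]_n) fuel y th :
  exists r, (icr_run a H G T D fuel y th).1 = (y, th) :: r.
Proof.
case: fuel => [|f] /=; (repeat case: ifP => _); eexists; reflexivity.
Qed.

Lemma aux_y (n l : nat) (X Y z : 'rV[R]_n) :
  (1 / 2) *: (X + 2 *: Y + (2 ^+ l)^-1 *: z - X) = Y + (2 ^+ l.+1)^-1 *: z.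
Proof.
apply/matrixP => i j; rewrite !mxE exprS.
have h2 : (2 : R) ^+ l != 0 by rewrite expf_neq0 // ?pnatr_eq0.
by field.
Qed.

Lemma aux_z (n l : nat) (y P Q z : 'rV[R]_n) :
  (1 / 2) *: (y - P) - Q = (2 ^+ l.+1)^-1 *: z -> y - (P + 2 *: Q) = (2 ^+ l)^-1 *: z.
Proof.
move/matrixP => e; apply/matrixP => i j; have := e i j; rewrite !mxE exprS.
have h2 : (2 : R) ^+ l != 0 by rewrite expf_neq0 // ?pnatr_eq0.
move=> e'.
have -> : y i j = 2 * ((1/2) * (y i j - P i j) - Q i j) + P i j + 2 * Q i j by field.
rewrite e'; by field.
Qed.

Lemma notin_bigcup (u : 'I_n_p) (s : seq {set 'I_n_p}) :
  (forall S, S \in s -> u \notin S) -> u \notin \bigcup_(S0 <- s) S0.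
Proof.
elim: s => [|S s IHs] h; first by rewrite big_nil inE.
rewrite big_cons inE negb_or h ?mem_head //= IHs // => S' hS'.
by apply: h; rewrite inE hS' orbT.
Qed.

Definition icr_prop (n : nat) (a : R) (G : 'M['F_2]_(m_p, n)) (d : nat)
  (D : 'rV[R]_n -> option 'rV['F_2]_n) (z : 'rV[R]_n) (fuel : nat) :=
  forall (l : nat) (m : 'I_n_p -> nat) (y : 'rV[R]_n) (th : nat),
  th = (\sum_u m u)%N -> (th <= fuel)%N -> (th <= (d.-1)./2)%N ->
  y = \sum_u (m u)%:R *: xsig a H G u + (2 ^+ l)^-1 *: z ->
  (forall v, v \in [seq phi_input a p.1 p.2 | p <- (icr_run a H G ((d.-1)./2) D fuel y th).1] ->
     forall c, in_code G c -> forall l' : nat,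
     v = \row_k mod2 (bitR (c 0 k) + ((2 * a)^-1 *: z) 0 k / 2 ^+ l') -> D v = Some c) ->
  exists Ls, (icr_run a H G ((d.-1)./2) D fuel y th).2 = Some Ls /\
    (forall S, S \in Ls -> forall u, u \in S -> m u != 0%N) /\
    (forall u, m u = 1%N -> u \in L_out Ls) /\
    y - \sum_(k < size Ls) (2 ^+ k : R) *: \sum_(u in nth set0 Ls k) xsig a H G u
      = (2 ^+ l)^-1 *: z.

Lemma icr_step (n : nat) (a : R) (G : 'M['F_2]_(m_p, n)) (d : nat)
  (D : 'rV[R]_n -> option 'rV['F_2]_n) (z : 'rV[R]_n) (fuel : nat) :
  0 < a -> row_free G -> min_distance H d ->
  (forall f, fuel = f.+1 -> icr_prop a G d D z f) -> icr_prop a G d D z fuel.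
Proof.
move=> a0 rfG md IH l m y th hth hf hT hy hD.
have hPhi : Phi a H G ((d.-1)./2) D y th = [set u | odd (m u)].
  apply: (Phi_eq D m a0 rfG md hth hT hy) => c cc hin.
  have [r hr] := @icr_run_fst n a G ((d.-1)./2) D fuel y th.
  apply: (hD _ _ c cc l); first by rewrite hr /= mem_head.
  rewrite hin; apply/matrixP => i k; rewrite !mxE; congr (mod2 (_ + _)).
  by rewrite mulrAC [RHS]mulrAC [(2 * a)^-1 * _]mulrC.
set S1 := [set u | odd (m u)].
pose m' u := (m u)./2.
have hcard : th = (#|S1| + 2 * \sum_u m' u)%N.
  rewrite card_odd hth big_distrr /= -big_split /=; apply: eq_bigr => u _.
  by rewrite -{1}(odd_double_half (m u)) -muln2 mulnC.
have hSx : \sum_(u in S1) xsig a H G u = \sum_u (odd (m u))%:R *: xsig a H G u.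
  rewrite big_mkcond /=; apply: eq_bigr => u _; rewrite inE.
  by case: odd; rewrite ?scale1r ?scale0r.
have S1nz : forall u, u \in S1 -> m u != 0%N.
  by move=> u; rewrite inE; apply: contraTneq => ->.
case: (eqVneq #|S1| th) => hA.
  have hfst : (icr_run a H G ((d.-1)./2) D fuel y th).2 = Some [:: S1].
    by case: fuel {IH hf hD} => [|f] /=; rewrite hPhi -/S1 hA eqxx.
  exists [:: S1]; split => //; split.
    by move=> S; rewrite inE => /eqP ->.
  split.
    by move=> u hu; rewrite /L_out /= big_nil setD0 inE hu.
  rewrite /= big_ord_recl big_ord0 addr0 expr0 scale1r hy hSx.
  have -> : \sum_u (m u)%:R *: xsig a H G u = \sum_u (odd (m u))%:R *: xsig a H G u.
    apply: eq_bigr => u _; congr (_%:R *: _).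
    have : (\sum_u m' u = 0)%N by move: hA hcard; lia.
    move/eqP; rewrite sum_nat_eq0 => /forallP /(_ u) /implyP /(_ isT) /eqP h0.
    by rewrite -{1}(odd_double_half (m u)) -/(m' u) h0 addn0.
  by rewrite addrAC subrr add0r.
have ltA : (#|S1| < th)%N by rewrite ltn_neqAle hA hcard leq_addr.
case: fuel IH hf hD => [|f] IH hf hD; first by move: ltA hf; lia.
have IHf := IH f erefl.
have hsub : (th - #|S1| = 2 * \sum_u m' u)%N by rewrite hcard addKn.
have hodd : odd (2 * \sum_u m' u) = false by rewrite oddM.
have hhalf : (2 * \sum_u m' u)./2 = (\sum_u m' u) by rewrite mul2n doubleK.
have hlt : (th < #|S1|)%N = false by rewrite ltnNge (ltnW ltA).
move: hD; rewrite /= hPhi -/S1 (negbTE hA) hlt hsub hodd hhalf /= => hD.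
set y' := (1 / 2) *: (y - \sum_(u in S1) xsig a H G u).
have h1 : (\sum_u m' u <= f)%N by move: hcard hf ltA; lia.
have h2 : (\sum_u m' u <= (d.-1)./2)%N by move: hcard hT; lia.
have h3 : y' = \sum_u (m' u)%:R *: xsig a H G u + (2 ^+ l.+1)^-1 *: z.
  rewrite /y' hy hSx.
  have -> : \sum_u (m u)%:R *: xsig a H G u =
     \sum_u (odd (m u))%:R *: xsig a H G u + 2 *: \sum_u (m' u)%:R *: xsig a H G u.
    rewrite scaler_sumr -big_split /=; apply: eq_bigr => u _.
    rewrite scalerA -scalerDl; congr (_ *: _).
    by rewrite -{1}(odd_double_half (m u)) natrD -muln2 natrM mulrC.
  by rewrite aux_y.
have [Ls' [e1 [e2 [e3 e4]]]] := IHf (l.+1) m' y' (\sum_u m' u) erefl h1 h2 h3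
  (fun v hv => hD v ltac:(by rewrite inE hv orbT)).
rewrite e1 /=; exists (S1 :: Ls'); split => //; split.
  move=> S; rewrite inE => /orP [/eqP -> //| hS u huS].
  have := e2 S hS u huS; rewrite /m'; apply: contra_neq => ->.
  by [].
split.
  move=> u hu; rewrite /L_out /= inE; apply/andP; split; last by rewrite inE hu.
  apply: notin_bigcup => S hS; apply/negP => huS.
  by have := e2 S hS u huS; rewrite /m' hu.
rewrite big_ord_recl /= expr0 scale1r.
set Q := \sum_(k < size Ls') _.
have -> : Q = 2 *: \sum_(k < size Ls') (2 ^+ k : R) *: \sum_(u in nth set0 Ls' k) xsig a H G u.
  rewrite scaler_sumr; apply: eq_bigr => i _; rewrite /bump add0n /= exprS scalerA.
  by [].
exact: (aux_z l e4).
Qed.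


Lemma icr_all (n : nat) (a : R) (G : 'M['F_2]_(m_p, n)) (d : nat)
  (D : 'rV[R]_n -> option 'rV['F_2]_n) (z : 'rV[R]_n) (fuel : nat) :
  0 < a -> row_free G -> min_distance H d -> icr_prop a G d D z fuel.
Proof.
move=> a0 rfG md; elim: fuel => [|f IH]; apply: icr_step => // f'.
by move=> [<-].
Qed.

End Aux.

Theorem theorem1 (R : realType) (a : R) (m_p n_p n : nat)
  (H : 'M['F_2]_(m_p, n_p)) (G : 'M['F_2]_(m_p, n)) (d : nat)
  (D : 'rV[R]_n -> option 'rV['F_2]_n)
  (U : finType) (A : {set U}) (uidx : U -> 'I_n_p) (z : 'rV[R]_n) :
  0 < a -> row_free G -> min_distance H d ->
  let T := (d.-1)./2 in
  let y := \sum_(i in A) xsig a H G (uidx i) + z in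
  let zt := (2 * a)^-1 *: z in
  (#|A| <= T)%N ->
  (forall v, v \in icr_D_inputs a H G T D y #|A| ->
     forall c, in_code G c -> forall l : nat,
       v = \row_k mod2 (bitR (c 0 k) + zt 0 k / 2 ^+ l) -> D v = Some c) ->
  exists Ls, icr_lists a H G T D y #|A| = Some Ls /\
    (forall u : 'I_n_p, #|[set i in A | uidx i == u]| = 1%N -> u \in L_out Ls) /\
    zhat a H G y Ls = z.
Proof.
move=> a0 rfG md T y zt hT hD.
pose m u := #|[set i in A | uidx i == u]|.
have hth : #|A| = (\sum_u m u)%N.
  rewrite -sum1_card (partition_big uidx predT) //=; apply: eq_bigr => u _.
  by rewrite /m -sum1_card; apply: eq_bigl => i; rewrite inE.
have hy : y = \sum_u (m u)%:R *: xsig a H G u + (2 ^+ 0)^-1 *: z.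
  rewrite expr0 invr1 scale1r /y (partition_big uidx predT) //=; congr (_ + _).
  apply: eq_bigr => u _.
  rewrite (eq_bigr (fun _ => xsig a H G u)); last by move=> i /andP[_ /eqP ->].
  rewrite /m scaler_nat -sumr_const; apply: eq_bigl => i; rewrite inE.
  by [].
have [Ls [e1 [e2 [e3 e4]]]] := icr_all D (z:=z) #|A|.+1 a0 rfG md 0 m hth (leqnSn _) hT hy hD.
exists Ls; split; first exact: e1.
split; first by move=> u hu; apply: e3.
by rewrite /zhat e4 expr0 invr1 scale1r.
Qed.
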